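(* For any continuous function $f\in C(\Omega)$: \[ |f|_{\infty} \;\geq\; \sup_{g\in L^2(\mu),\ |g|=1} \big| f\,(g\circ\sigma) \big| \;\geq\; |L f|_{\infty}. \] Furthermore, if $f\in C(\Omega)$ does not depend on the first coordinate (that is, if $f$ is $\sigma^{-1}(\mathfrak{B})$-measurable, where $\mathfrak{B}$ is the Borel sigma-algebra of $\Omega$), then both inequalities in the display above are equalities.
   Context: Let $\Omega=\{0,1\}^{\mathbb{N}}$ with the shift map $\sigma$, and let $\mu$ be the measure of maximal entropy for $\sigma$. For $x\in\Omega$ and $a\in\{0,1\}$, $ax$ denotes the sequence obtained by concatenating the symbol $a$ to the left of $x$. The Ruelle operator $L: L^2(\mu)\to L^2(\mu)$ is given by $L(g)(x)=\frac{1}{2}\big(g(0x)+g(1x)\big)$, and the Koopman operator $K=L^{\dagger}$ is given by $K(g)=g\circ\sigma$. Here $|\cdot|$ denotes the $L^2(\mu)$-norm and $|\cdot|_{\infty}$ the supremum norm; $f$ denotes a continuous real function and $g$ a square-integrable function. *)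

(* Defs.v *)
From HB Require Import structures.
From mathcomp Require Import all_boot all_order all_algebra.
From mathcomp Require Import all_classical all_reals all_analysis.
Set Implicit Arguments. Unset Strict Implicit. Unset Printing Implicit Defensive.
Import Order.TTheory GRing.Theory Num.Theory.
Import numFieldNormedType.Exports.
Local Open Scope classical_set_scope.
Local Open Scope ring_scope.

(* Omega = {0,1}^N (false = 0, true = 1), with the Borel sigma-algebra
   of the product topology (cantor_space). *)
Definition Omega : Type := g_sigma_algebraType (@open cantor_space).

Definition shift (x : nat -> bool) : nat -> bool := fun n => x n.+1.

Definition scons (a : bool) (x : nat -> bool) : nat -> bool :=
  fun n => if n is k.+1 then x k else a.

Definition cylinder (w : seq bool) : set Omega :=
  [set x | forall i, (i < size w)%N -> x i = nth false w i].

(* mu is the measure of maximal entropy of the full 2-shift, i.e. the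
   (1/2,1/2)-Bernoulli measure: every cylinder of length n has measure 2^-n.
   (This determines mu uniquely on the Borel sigma-algebra.) *)
Definition max_entropy_measure {R : realType}
    (mu : {measure set Omega -> \bar R}) : Prop :=
  forall w : seq bool, mu (cylinder w) = ((2%:R : R) ^- size w)%:E.

Definition ruelle {R : realType} (g : (nat -> bool) -> R) : (nat -> bool) -> R :=
  fun x => (g (scons false x) + g (scons true x)) / 2%:R.

Definition supnorm {R : realType} (f : (nat -> bool) -> R) : \bar R :=
  ereal_sup (range (fun x => (`|f x|)%:E)).

Definition L2norm {R : realType} (mu : {measure set Omega -> \bar R})
    (g : Omega -> R) : \bar R :=
  Lnorm mu 2%:E (EFin \o g).

Definition koopman_mult_norm {R : realType} (mu : {measure set Omega -> \bar R})
    (f : (nat -> bool) -> R) : \bar R :=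
  ereal_sup [set L2norm mu (fun x : Omega => f x * g (shift x)) | g in
     [set g : Omega -> R | measurable_fun [set: Omega] g /\ L2norm mu g = 1%E]].

Definition indep_first {R : realType} (f : (nat -> bool) -> R) : Prop :=
  forall x y : nat -> bool, shift x = shift y -> f x = f y.

(* Main.v *)
Require Import Defs.
From HB Require Import structures.
From mathcomp Require Import all_boot all_order all_algebra.
From mathcomp Require Import all_classical all_reals all_analysis measurable_realfun.
From mathcomp Require Import ring lra.
Import Order.TTheory GRing.Theory Num.Theory.
Import numFieldNormedType.Exports.
Local Open Scope classical_set_scope.
Local Open Scope ring_scope.

Lemma cyl_cvg (x : cantor_space) (y : nat -> cantor_space) :
  (forall n i, (i < n)%N -> y n i = x i) -> y @ \oo --> x.
Proof.
move=> hy.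
apply/cvg_sup => N U [V] [[W] oW <-] WfN WU.
by apply: (filterS WU); rewrite nbhs_simpl; exists N.+1 => // i /= Ni; rewrite /= hy.
Qed.

Lemma nbhs_cyl (x : cantor_space) (U : set cantor_space) :
  nbhs x U -> exists n, forall y : cantor_space, (forall i, (i < n)%N -> y i = x i) -> U y.
Proof.
move=> nU; apply: contrapT => /forallNP h.
have h' n : exists y : cantor_space, (forall i, (i < n)%N -> y i = x i) /\ ~ U y.
  by have /existsNP[y /not_implyP[] ? ?] := h n; exists y.
have [y hy] := choice h'.
have := @cyl_cvg x y (fun n => (hy n).1).
move=> /(_ U nU) [N _ HN].
by apply: (hy N).2; apply: HN => /=.
Qed.

Lemma open_coord i (b : bool) : open [set x : cantor_space | x i = b].
Proof.
have h := @proj_continuous nat (fun _ => bool) i.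
have := proj1 (@continuousP cantor_space bool (fun x => x i)) h.
move=> /(_ [set b]); apply; exact: discrete_open.
Qed.

Lemma mcoord i b : measurable [set x : Omega | x i = b].
Proof. by apply: sub_sigma_algebra; exact: open_coord. Qed.

Lemma mcyl_n n (w : seq bool) :
  measurable [set x : Omega | forall i, (i < n)%N -> x i = nth false w i].
Proof.
elim: n => [|n IH].
  by rewrite (_ : [set x | _] = setT) //; apply/seteqP; split => x //= _ i.
rewrite (_ : [set x | _] = [set x : Omega | forall i, (i < n)%N -> x i = nth false w i]
   `&` [set x : Omega | x n = nth false w n]).
  exact: measurableI IH (mcoord _ _).
apply/seteqP; split => x /=.
  by move=> h; split => [i ilt|]; apply: h => //; exact: ltnW.
by move=> [h1 h2] i; rewrite ltnS leq_eqVlt => /orP[/eqP ->|/h1].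
Qed.

Lemma mcyl w : measurable (cylinder w).
Proof. exact: mcyl_n. Qed.

Lemma mfR (R : realType) (f : cantor_space -> R) : continuous f ->
  measurable_fun [set: Omega] (f : Omega -> R).
Proof.
move=> /continuousP cf; apply: (measurability _ (measurable_realfun.RGenOpens.measurableE R)).
move=> _ [_ [a [b ->] <-]]; rewrite setTI; apply: sub_sigma_algebra.
exact/cf/interval_open.
Qed.

Definition Gc : set (set Omega) := [set A | A = set0 \/ exists w, A = cylinder w].

Lemma cylT : cylinder [::] = setT.
Proof. by apply/seteqP; split => x //= _ i. Qed.

Lemma cylI_le w1 w2 : (size w1 <= size w2)%N -> Gc (cylinder w1 `&` cylinder w2).
Proof.
move=> hs.
have [h|h] := pselect (forall i, (i < size w1)%N -> nth false w1 i = nth false w2 i).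
  right; exists w2; apply/seteqP; split => x /=; first by case.
  move=> hx; split => // i ilt; rewrite hx ?h //; exact: leq_trans ilt hs.
left; apply/seteqP; split => x // [/= h1 h2]; apply: h => i ilt.
by rewrite -h1 // h2 //; exact: leq_trans ilt hs.
Qed.

Lemma GcI : setI_closed Gc.
Proof.
move=> A B [->|[w1 ->]]; first by rewrite set0I; left.
move=> [->|[w2 ->]]; first by rewrite setI0; left.
have [h|h] := leqP (size w1) (size w2); first exact: cylI_le.
by rewrite setIC; apply: cylI_le; exact: ltnW.
Qed.

Lemma OmegaE : @measurable _ Omega = <<s Gc >>.
Proof.
rewrite eqEsubset; split => A.
  apply: smallest_sub; first exact: smallest_sigma_algebra.
  move=> U oU.
  pose B k : set Omega := if unpickle k is Some w then
     (if pselect (cylinder w `<=` U) then cylinder w else set0) else set0.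
  have -> : U = \bigcup_k B k.
    apply/seteqP; split => [x Ux|x [k _]]; last first.
      rewrite /B; case: (unpickle k) => // w; case: (pselect (cylinder w `<=` U)) => // h; exact: h.
    have : nbhs (x : cantor_space) U by rewrite openE in oU; exact: oU.
    move=> /nbhs_cyl [n hn].
    exists (pickle (mkseq x n)) => //; rewrite /B pickleK.
    have sub : cylinder (mkseq x n) `<=` U.
      move=> y /= hy; apply: hn => i ilt.
      by rewrite hy ?size_mkseq // nth_mkseq.
    case: (pselect (cylinder (mkseq x n) `<=` U)) => [hh|//].
    by move=> i; rewrite size_mkseq => ilt; rewrite nth_mkseq.
  have [_ _ hcup] := smallest_sigma_algebra setT Gc.
  apply: hcup => k; rewrite /B; case: (unpickle k) => [w|].
    case: (pselect (cylinder w `<=` U)) => hh; apply: sub_sigma_algebra; [right; exists w|left] => //.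
  by apply: sub_sigma_algebra; left.
apply: smallest_sub; first exact: smallest_sigma_algebra.
move=> _ [->|[w ->]]; first exact: measurable0.
exact: mcyl.
Qed.

Lemma shift_cyl w : (Defs.shift : Omega -> Omega) @^-1` cylinder w = cylinder (false :: w) `|` cylinder (true :: w).
Proof.
apply/seteqP; split => x /=.
  move=> h; have hx : forall i, (i < size w)%N -> x i.+1 = nth false w i by [].
  case E: (x 0%N); [right|left] => -[|i] //= ilt; exact: hx.
by move=> [] h i ilt; apply: (h i.+1).
Qed.

Lemma mshift : measurable_fun [set: Omega] (Defs.shift : Omega -> Omega).
Proof.
apply: (measurability _ OmegaE) => _ [A [->|[w ->]] <-].
  by rewrite preimage_set0 setI0; exact: measurable0.
by rewrite setTI shift_cyl; apply: measurableU; exact: mcyl.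
Qed.

Lemma mu_shift (R : realType) (mu : {measure set Omega -> \bar R}) :
  max_entropy_measure mu ->
  forall A, measurable A -> mu ((Defs.shift : Omega -> Omega) @^-1` A) = mu A.
Proof.
move=> hmu A mA.
apply: (@measure_unique _ R Omega Gc (fun _ => setT) OmegaE GcI _ _ (pushforward mu (Defs.shift : Omega -> Omega)) mu) => //.
- by move=> _; right; exists [::]; rewrite cylT.
- by rewrite bigcup_const.
- exact: mshift.
- move=> h _ [->|[w ->]] /=; first by rewrite /pushforward preimage_set0 !measure0.
  rewrite /pushforward shift_cyl measureU; try exact: mcyl.
    have h0 := hmu (false :: w); have h1 := hmu (true :: w). transitivity (((2:R) ^- size (false::w))%:E + ((2:R) ^- size (true::w))%:E)%E.
      by congr (_ + _)%E; [exact: h0|exact: h1].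
    rewrite -EFinD /=; transitivity ((2:R) ^- size w)%:E; last by symmetry; exact: (hmu w).
    congr EFin; rewrite exprS invfM; field.
    by rewrite expf_eq0 pnatr_eq0 andbF.
  rewrite predeqE => x; split => // -[/= h1 h2].
  by have := h1 0%N erefl; rewrite h2.
- move=> h _; change (mu setT < +oo)%E; rewrite -cylT.
  by have := hmu [::]; rewrite /= expr0 invr1 => ->; rewrite ltry.
Qed.

Lemma int_shift (R : realType) (mu : {measure set Omega -> \bar R}) (F : Omega -> \bar R) :
  max_entropy_measure mu ->
  measurable_fun [set: Omega] F -> (forall x, (0 <= F x)%E) ->
  (\int[mu]_x F (Defs.shift x) = \int[mu]_x F x)%E.
Proof.
move=> hmu mF F0.
have := ge0_integral_pushforward mshift mu measurableT mF (fun y _ => F0 y).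
rewrite preimage_setT => <-.
apply: eq_measure_integral; first exact: mshift.
by move=> h A mA _; exact: (@mu_shift R mu hmu A mA).
Qed.

Lemma L2E (R : realType) (mu : {measure set Omega -> \bar R}) (g : Omega -> R) :
  L2norm mu g = sqrte (\int[mu]_x ((g x) ^+ 2)%:E)%E.
Proof.
rewrite /L2norm unlock /= poweR12_sqrt; last first.
  by apply: integral_ge0 => x _; rewrite lee_fin powR_ge0.
apply: congr1; apply: eq_integral => x _ /=.
by rewrite -[2%R]/(2%:R) powR_mulrn // real_normK // num_real.
Qed.

Lemma partA (R : realType) (mu : {measure set Omega -> \bar R})
  (hmu : max_entropy_measure mu) (f : cantor_space -> R) (hf : continuous f) (m : R) :
  (forall y, `|f y| <= m) -> forall g : Omega -> R, measurable_fun [set: Omega] g ->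
  L2norm mu g = 1%E -> (L2norm mu (fun x : Omega => (f x * g (Defs.shift x))%R) <= m%:E)%E.
Proof.
move=> hm g mg; rewrite !L2E => hg.
have m0 : 0 <= m := le_trans (normr_ge0 _) (hm (fun _ => false)).
have I1 : (\int[mu]_x ((g x)^+2)%:E = 1)%E.
  rewrite -(@sqr_sqrte _ (\int[mu]_x ((g x)^+2)%:E)%E) ?hg //.
    by rewrite expe2 mule1.
  by apply: integral_ge0 => x _; rewrite lee_fin sqr_ge0.
have mf := @mfR R f hf.
have mgs : measurable_fun [set: Omega] (fun x => g (Defs.shift x)).
  exact: (measurableT_comp mg mshift).
have -> : (m%:E = sqrte ((m ^+ 2)%:E))%E.
  by rewrite EFin_expe sqrte_sqr gee0_abs // lee_fin.
rewrite lee_sqrt ?lee_fin ?sqr_ge0 //.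
apply: (@le_trans _ _ (\int[mu]_x ((m^+2)%:E * ((g (Defs.shift x))^+2)%:E))%E).
  apply: ge0_le_integral => //.
  - by move=> x _; rewrite lee_fin sqr_ge0.
  - by apply/measurable_EFinP; exact: (measurable_funX 2 (measurable_funM mf mgs)).
  - apply/measurable_EFinP; apply: (measurable_funM (measurable_cst _)).
    exact: (measurable_funX 2 mgs).
  move=> x _; rewrite -EFinM lee_fin exprMn ler_wpM2r ?sqr_ge0 //.
  by rewrite -real_normK ?num_real // ler_sqr ?nnegrE.
rewrite ge0_integralZl_EFin //; last 3 first.
- by move=> x _; rewrite lee_fin sqr_ge0.
- by apply/measurable_EFinP; exact: (measurable_funX 2 mgs).
- by rewrite sqr_ge0.
rewrite (@int_shift R mu (fun y => ((g y)^+2)%:E)) //.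
- by rewrite I1 mule1.
- by apply/measurable_EFinP; exact: (measurable_funX 2 mg).
- by move=> x; rewrite lee_fin sqr_ge0.
Qed.

Lemma int_ind (R : realType) (mu : {measure set Omega -> \bar R}) (k : R) (A : set Omega) :
  0 <= k -> measurable A -> (\int[mu]_x (k * \1_A x)%:E = k%:E * mu A)%E.
Proof.
move=> k0 mA.
under eq_integral do rewrite EFinM.
rewrite ge0_integralZl_EFin //; first by rewrite integral_indic // setIT.
by apply/measurable_EFinP; exact: measurable_indic.
Qed.

Lemma cyl_agree (w : seq bool) (b : bool) (x : cantor_space) n0 (y : Omega) :
  (n0 <= size w)%N -> (forall i, (i < size w)%N -> nth false w i = x i) ->
  cylinder (b :: w) y -> forall i, (i < n0)%N -> y i = Defs.scons b x i.
Proof.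
move=> hn hw hy [|i] ilt; first by rewrite (hy 0%N).
have iw : (i < size w)%N by apply: leq_trans (ltnW ilt) hn.
by rewrite (hy i.+1) //= hw.
Qed.

Lemma aux_field (R : realType) (t a b : R) : t != 0 ->
  (a + b) / 2 = t * a / (2 * t) + t * b / (2 * t).
Proof. by move=> ?; field. Qed.

Lemma aux_sq (R : realType) (a b : R) : ((a + b) / 2) ^+ 2 <= (a ^+ 2 + b ^+ 2) / 2.
Proof.
rewrite -subr_ge0.
have -> : (a ^+ 2 + b ^+ 2) / 2 - ((a + b) / 2) ^+ 2 = ((a - b) / 2) ^+ 2 by field.
exact: sqr_ge0.
Qed.

Lemma partB (R : realType) (mu : {measure set Omega -> \bar R})
  (hmu : max_entropy_measure mu) (f : cantor_space -> R) (hf : continuous f)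
  (x : cantor_space) (d : R) : 0 < d ->
  exists g : Omega -> R, [/\ measurable_fun [set: Omega] g, L2norm mu g = 1%E &
   ((`|ruelle f x|)%:E <= L2norm mu (fun y : Omega => (f y * g (Defs.shift y))%R) + d%:E)%E].
Proof.
move=> d0.
set p0 := Defs.scons false x; set p1 := Defs.scons true x.
have [n0 hn0] : exists n0, forall y : cantor_space,
    (forall i, (i < n0)%N -> y i = p0 i) -> `|f p0 - f y| < d.
  apply: nbhs_cyl; exact: (cvgr_dist_lt _ _ (hf p0) _ d0).
have [n1 hn1] : exists n1, forall y : cantor_space,
    (forall i, (i < n1)%N -> y i = p1 i) -> `|f p1 - f y| < d.
  apply: nbhs_cyl; exact: (cvgr_dist_lt _ _ (hf p1) _ d0).
pose n := maxn n0 n1; pose w := mkseq x n.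
have sw : size w = n by rewrite size_mkseq.
have hw : forall i, (i < size w)%N -> nth false w i = x i.
  by move=> i; rewrite sw => ilt; rewrite nth_mkseq.
pose C := cylinder w; pose C0 := cylinder (false :: w); pose C1 := cylinder (true :: w).
pose a := Num.max (`|f p0| - d) 0; pose b := Num.max (`|f p1| - d) 0.
have a0 : 0 <= a by rewrite le_max lexx orbT.
have b0 : 0 <= b by rewrite le_max lexx orbT.
have ha1 : `|f p0| <= a + d by rewrite -lerBlDr le_max lexx.
have hb1 : `|f p1| <= b + d by rewrite -lerBlDr le_max lexx.
have ha : forall y : Omega, C0 y -> a ^+ 2 <= f y ^+ 2.
  move=> y hy; have hd := hn0 y (@cyl_agree w false x n0 y ltac:(by rewrite sw leq_maxl) hw hy).
  rewrite -[f y ^+ 2]real_normK ?num_real // ler_sqr ?nnegrE //.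
  rewrite /a ge_max normr_ge0 andbT lerBlDr.
  have := ler_normD (f y) (f p0 - f y); rewrite addrC subrK.
  move=> h; apply: (le_trans h); rewrite lerD2l; exact: ltW.
have hb : forall y : Omega, C1 y -> b ^+ 2 <= f y ^+ 2.
  move=> y hy; have hd := hn1 y (@cyl_agree w true x n1 y ltac:(by rewrite sw leq_maxr) hw hy).
  rewrite -[f y ^+ 2]real_normK ?num_real // ler_sqr ?nnegrE //.
  rewrite /b ge_max normr_ge0 andbT lerBlDr.
  have := ler_normD (f y) (f p1 - f y); rewrite addrC subrK.
  move=> h; apply: (le_trans h); rewrite lerD2l; exact: ltW.
have mC : measurable C := mcyl w.
have mC0 : measurable C0 := mcyl (false :: w).
have mC1 : measurable C1 := mcyl (true :: w).
have muC : mu C = ((2:R) ^- n)%:E by rewrite -sw; exact: hmu.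
have muC0 : mu C0 = ((2:R) ^- n.+1)%:E by rewrite -sw; exact: (hmu (false :: w)).
have muC1 : mu C1 = ((2:R) ^- n.+1)%:E by rewrite -sw; exact: (hmu (true :: w)).
have p2n : 0 <= (2:R) ^+ n by rewrite exprn_ge0.
have p2n0 : (2:R) ^+ n != 0 by rewrite expf_eq0 pnatr_eq0 andbF.
pose s := Num.sqrt ((2:R) ^+ n).
have s2 : s ^+ 2 = 2 ^+ n by rewrite sqr_sqrtr.
pose g := fun y : Omega => s * \1_C y.
have mg : measurable_fun [set: Omega] g.
  exact: (measurable_funM (measurable_cst _) (measurable_indic mC)).
have mgs : measurable_fun [set: Omega] (fun y => g (Defs.shift y)).
  exact: (measurableT_comp mg mshift).
have mf := @mfR R f hf.
have ind2 : forall (A : set Omega) y, (\1_A y : R) ^+ 2 = \1_A y.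
  by move=> A y; rewrite indicE; case: (y \in A); rewrite ?expr1n ?expr0n.
exists g; split => //.
  rewrite L2E.
  transitivity (sqrte (((2:R) ^+ n)%:E * mu C))%E.
    apply: congr1; rewrite -int_ind //; apply: eq_integral => y _.
    by rewrite /g exprMn s2 ind2.
  rewrite muC -EFinM mulfV //.
  by rewrite /sqrte /= sqrtr1.
rewrite L2E.
set J := (\int[mu]_y _)%E.
have J0 : (0 <= J)%E by apply: integral_ge0 => y _; rewrite lee_fin sqr_ge0.
have h2 : 0 <= (a + b) / 2 by rewrite divr_ge0 // addr_ge0.
have key : ((((a ^+ 2 + b ^+ 2) / 2))%:E <= J)%E.
  pose F := fun y : Omega => ((2:R) ^+ n * a ^+ 2) * \1_C0 y + ((2:R) ^+ n * b ^+ 2) * \1_C1 y.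
  have mF : measurable_fun [set: Omega] F.
    apply: measurable_funD; apply: measurable_funM; (try exact: measurable_cst);
      exact: measurable_indic.
  have -> : (((a ^+ 2 + b ^+ 2) / 2)%:E = \int[mu]_y (F y)%:E)%E.
    under eq_integral do rewrite EFinD.
    rewrite ge0_integralD //; last 4 first.
    - by move=> y _; rewrite lee_fin mulr_ge0 ?indicE ?mulr_ge0 ?sqr_ge0.
    - by apply/measurable_EFinP; apply: measurable_funM => //; exact: measurable_indic.
    - by move=> y _; rewrite lee_fin mulr_ge0 ?indicE ?mulr_ge0 ?sqr_ge0.
    - by apply/measurable_EFinP; apply: measurable_funM => //; exact: measurable_indic.
    rewrite !int_ind ?mulr_ge0 ?sqr_ge0 // muC0 muC1 -!EFinM -EFinD; congr EFin.
    by rewrite (@aux_field R (2 ^+ n) (a ^+ 2) (b ^+ 2) p2n0) -exprS.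
  apply: ge0_le_integral => //.
  - by move=> y _; rewrite lee_fin /F !indicE addr_ge0 ?mulr_ge0 ?sqr_ge0.
  - exact/measurable_EFinP.
  - by apply/measurable_EFinP; exact: (measurable_funX 2 (measurable_funM mf mgs)).
  move=> y _; rewrite lee_fin /F /g exprMn exprMn s2 ind2.
  have [hy0|hy0] := pselect (C0 y).
    have hy1 : ~ C1 y by move=> hy1; have := hy1 0%N erefl; rewrite (hy0 0%N erefl).
    have hyC : C (Defs.shift y) by move=> i ilt; exact: (hy0 i.+1).
    rewrite !indicE (mem_set hy0) (memNset hy1) (mem_set hyC) /= !mulr1 mulr0 addr0.
    by rewrite [X in _ <= X]mulrC ler_wpM2l // ha.
  have [hy1|hy1] := pselect (C1 y).
    have hyC : C (Defs.shift y) by move=> i ilt; exact: (hy1 i.+1).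
    rewrite !indicE (memNset hy0) (mem_set hy1) (mem_set hyC) /= !mulr1 mulr0 add0r.
    by rewrite [X in _ <= X]mulrC ler_wpM2l // hb.
  rewrite !indicE (memNset hy0) (memNset hy1) /= !mulr0 addr0.
  by rewrite mulr_ge0 ?sqr_ge0 // mulr_ge0 // indicE.
apply: (@le_trans _ _ (((a + b) / 2)%:E + d%:E)%E).
  rewrite -EFinD lee_fin /ruelle -/p0 -/p1.
  have /andP[u1 u2] : - (a + d) <= f p0 <= a + d by rewrite -ler_norml.
  have /andP[v1 v2] : - (b + d) <= f p1 <= b + d by rewrite -ler_norml.
  rewrite ler_norml; apply/andP; split; lra.
apply: leeD2r.
have -> : (((a + b) / 2)%:E = sqrte ((((a + b) / 2) ^+ 2)%:E))%E.
  by rewrite EFin_expe sqrte_sqr gee0_abs // lee_fin.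
rewrite lee_sqrt //; apply: le_trans key; rewrite lee_fin.
exact: aux_sq.
Qed.
Lemma half2 (R : realType) (u : R) : ((u + u) / 2%:R = u)%R.
Proof. by field. Qed.

Local Open Scope ereal_scope.

Theorem lemma2p14 (R : realType) (mu : {measure set Omega -> \bar R})
    (hmu : max_entropy_measure mu)
    (f : cantor_space -> R) (hf : continuous f) :
  (supnorm f >= koopman_mult_norm mu f /\
   koopman_mult_norm mu f >= supnorm (ruelle f)) /\
  (indep_first f ->
     supnorm f = koopman_mult_norm mu f /\
     koopman_mult_norm mu f = supnorm (ruelle f)).
Proof.
have ub : forall y, (`|f y|)%:E <= supnorm f.
  by move=> y; apply: ereal_sup_ubound; exists y.
have hA : koopman_mult_norm mu f <= supnorm f.
  apply: ge_ereal_sup => _ [g [mg hg] <-].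
  case E : (supnorm f) => [m| |]; last 2 first.
  - by rewrite leey.
  - by have := ub (fun _ => false); rewrite E leeNy_eq.
  apply: (@partA R mu hmu f hf m) => // y.
  by have := ub y; rewrite E lee_fin.
have hB : supnorm (ruelle f) <= koopman_mult_norm mu f.
  apply: ge_ereal_sup => _ [x _ <-]; apply/lee_addgt0Pr => e e0.
  have [g [mg hg hle]] := @partB R mu hmu f hf x e e0.
  apply: (le_trans hle); apply: leeD2r; apply: ereal_sup_ubound.
  by exists g.
split => [//|hind].
have hR : supnorm (ruelle f) = supnorm f.
  rewrite /supnorm; congr ereal_sup; apply/seteqP; split => _ [y _ <-].
  - exists (Defs.scons false y) => //; congr (_%:E); congr (`|_|)%R.
    rewrite /ruelle (hind (Defs.scons true y) (Defs.scons false y) erefl).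
    by rewrite half2.
  - exists (Defs.shift y) => //; congr (_%:E); congr (`|_|)%R.
    rewrite /ruelle (hind (Defs.scons true (Defs.shift y)) y erefl).
    rewrite (hind (Defs.scons false (Defs.shift y)) y erefl).
    by rewrite half2.
split; apply: le_anti.
  by rewrite hA andbT -hR.
by rewrite hB andbT hR.
Qed.
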